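(* Let $\lambda\in\overline{\mathbb C}_+\setminus\{0\}$ and put $h(x,\lambda)=\big|\exp\big(\tfrac23z(x,\lambda)^{3/2}\big)\big|=\exp\big(\mathrm{Re}\,\lambda\,\xi(x\lambda^{-1/2})\big)$ for $x\ge0$. Then: (1) if $\lambda>0$, then $h(\cdot,\lambda)$ is strictly increasing on $[x_*,\infty)$ and $h(\cdot,\lambda)\equiv1$ on $[0,x_*]$, where $x_*=\sqrt\lambda$; (2) if $0<\arg\lambda\le\pi$, then $h(\cdot,\lambda)$ is strictly increasing on $[0,\infty)$.
   Context: Powers and logarithms are principal on $\mathbb C\setminus(-\infty,0]$. $S(I)=\{re^{i\varphi}:r>0,\varphi\in I\}$. Let $\xi(t)=\int_1^t\sqrt{s^2-1}\,ds=\frac12\big(t\sqrt{t^2-1}-\log(t+\sqrt{t^2-1})\big)$, holomorphic on $S(-\pi/2,0)$ with $\xi(t)>0$ for $t>1$, extended by continuity to $\overline{S(-\pi/2,0)}$ (so $\xi(0)=i\pi/4$). It is a fact that $\xi(t)\ne0$ for $t\ne1$ and $\xi$ takes values with argument in $[-3\pi/2,0]$; let $\Phi(t)\in[-3\pi/2,0]$ be that determination of $\arg\xi(t)$. Define $k(t)=|\tfrac32\xi(t)|^{2/3}e^{\frac23i\Phi(t)}$ (so $k(0)=-(3\pi/8)^{2/3}$, $k>0$ for $t>1$); $k$ is a conformal map of $S(-\pi/2,0)$. For $\lambda=|\lambda|e^{2i\theta}$, $\theta\in[0,\pi/2]$, and $x\ge0$, set $z(x,\lambda)=\lambda^{2/3}k(x\lambda^{-1/2})$,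 and use the convention $\tfrac23z(x,\lambda)^{3/2}:=\lambda\,\xi(x\lambda^{-1/2})$. *)

(* Defs.v *)
From Stdlib Require Import Reals Lra ClassicalEpsilon.
From Coquelicot Require Import Coquelicot.
Open Scope R_scope.

(* Principal argument, values in (-PI, PI]; Carg 0 = 0 (irrelevant). *)
Definition Carg (z : C) : R :=
  let x := Re z in let y := Im z in
  if Rlt_dec 0 x then atan (y / x)
  else if Rlt_dec x 0 then
    (if Rle_dec 0 y then atan (y / x) + PI else atan (y / x) - PI)
  else if Rlt_dec 0 y then PI / 2
  else if Rlt_dec y 0 then - (PI / 2)
  else 0.

Definition Cexp (w : C) : C := (exp (Re w) * cos (Im w), exp (Re w) * sin (Im w)).
Definition Clog (z : C) : C := (ln (Cmod z), Carg z).

(* Principal power z^a = exp(a log z), with 0^a := 0. *)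
Definition Cpow (z a : C) : C :=
  if Ceq_dec z 0 then 0%C else Cexp (Cmult a (Clog z)).

Definition Csqrt (z : C) : C := Cpow z (RtoC (1/2)).

Definition xi_formula (t : C) : C :=
  Cmult (RtoC (1/2))
    (Cminus (Cmult t (Csqrt (Cminus (Cmult t t) 1)))
            (Clog (Cplus t (Csqrt (Cminus (Cmult t t) 1))))).

Definition open_sector (t : C) : Prop :=
  t <> 0%C /\ - (PI / 2) < Carg t < 0.

(* xi: the formula on the open sector, extended by continuity (limit within
   the open sector) to the closure of the sector. *)
Definition xi (t : C) : C :=
  if excluded_middle_informative (open_sector t) then xi_formula t
  else @lim C_CompleteNormedModule
         (filtermap xi_formula (within open_sector (locally (t : C_CompleteNormedModule)))).

Definition h (x : R) (lam : C) : R :=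
  exp (Re (Cmult lam (xi (Cmult (RtoC x) (Cpow lam (RtoC (-1/2))))))).

(* Main.v *)
Require Import Defs.
From Stdlib Require Import Reals Lra Psatz ClassicalEpsilon.
From Coquelicot Require Import Coquelicot.
Open Scope R_scope.

Lemma sqrt_1_u2_pos u : 0 < sqrt (1 + u²).
Proof. apply sqrt_lt_R0. pose proof (Rle_0_sqr u). lra. Qed.

Lemma Cmod_eq_u x y : x <> 0 -> Cmod (x, y) = Rabs x * sqrt (1 + (y/x)²).
Proof.
  intro Hx. unfold Cmod; simpl.
  rewrite <- sqrt_Rsqr_abs. rewrite <- sqrt_mult_alt by apply Rle_0_sqr.
  f_equal. unfold Rsqr. field. auto.
Qed.

Lemma polar1 (z : C) : z <> 0%C ->
  Re z = Cmod z * cos (Carg z) /\ Im z = Cmod z * sin (Carg z).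
Proof.
  destruct z as [x y]; intro Hz. unfold Carg; simpl.
  destruct (Rlt_dec 0 x) as [H1|H1].
  - rewrite Cmod_eq_u by lra. rewrite cos_atan, sin_atan. rewrite Rabs_pos_eq by lra.
    pose proof (sqrt_1_u2_pos (y/x)). split; field_simplify; try lra; field; lra.
  - destruct (Rlt_dec x 0) as [H2|H2].
    + rewrite Cmod_eq_u by lra. rewrite Rabs_left by lra.
      pose proof (sqrt_1_u2_pos (y/x)).
      destruct (Rle_dec 0 y).
      * rewrite neg_cos, neg_sin, cos_atan, sin_atan. split; field; lra.
      * replace (atan (y / x) - PI) with (atan (y/x) + PI - 2*PI) by ring.
        rewrite cos_minus, sin_minus, cos_2PI, sin_2PI, neg_cos, neg_sin, cos_atan, sin_atan.
        split; field; lra.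
    + assert (x = 0) by lra. subst x.
      unfold Cmod; cbn [fst snd].
      destruct (Rlt_dec 0 y).
      * rewrite cos_PI2, sin_PI2. replace (0^2 + y^2) with (y*y) by ring. rewrite sqrt_square by lra. lra.
      * destruct (Rlt_dec y 0).
        -- rewrite cos_neg, sin_neg, cos_PI2, sin_PI2. replace (0^2 + y^2) with ((-y)*(-y)) by ring.
           rewrite sqrt_square by lra. lra.
        -- exfalso. apply Hz. assert (y = 0) by lra. subst. reflexivity.
Qed.

Lemma Carg_range z : - PI < Carg z <= PI.
Proof.
  destruct z as [x y]. unfold Carg; simpl. pose proof (atan_bound (y/x)). pose proof PI_RGT_0.
  destruct (Rlt_dec 0 x). lra.
  destruct (Rlt_dec x 0).
  - destruct (Rle_dec 0 y).
    + assert (atan (y/x) <= 0). { destruct (Req_dec y 0). subst. unfold Rdiv. rewrite Rmult_0_l, atan_0. lra.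
        left. rewrite <- atan_0. apply atan_increasing. apply Rdiv_pos_neg; lra. }
      lra.
    + assert (0 < atan (y/x)). { rewrite <- atan_0. apply atan_increasing. apply Rdiv_neg_neg; lra. } lra.
  - destruct (Rlt_dec 0 y). lra. destruct (Rlt_dec y 0); lra.
Qed.

Lemma sector_iff t : open_sector t <-> 0 < Re t /\ Im t < 0.
Proof.
  destruct t as [x y]. unfold open_sector, Carg; simpl. pose proof (atan_bound (y/x)). pose proof PI_RGT_0.
  split.
  - intros [Hz Ha]. destruct (Rlt_dec 0 x).
    + split; auto. destruct (Rlt_dec y 0); auto. exfalso.
      assert (0 <= atan (y/x)). { destruct (Req_dec y 0). subst. unfold Rdiv. rewrite Rmult_0_l, atan_0. lra.
        left. rewrite <- atan_0. apply atan_increasing. apply Rdiv_pos_pos; lra. } lra.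
    + destruct (Rlt_dec x 0).
      * destruct (Rle_dec 0 y); lra.
      * destruct (Rlt_dec 0 y); [lra|]. destruct (Rlt_dec y 0); lra.
  - intros [Hx Hy]. split.
    + intro E. injection E. lra.
    + destruct (Rlt_dec 0 x); [|lra]. split. lra.
      rewrite <- atan_0. apply atan_increasing. apply Rdiv_neg_pos; lra.
Qed.

Lemma tan_addPI x : cos x <> 0 -> tan (x + PI) = tan x.
Proof. intro. unfold tan. rewrite neg_sin, neg_cos. field. auto. Qed.

Lemma Carg_polar r th : 0 < r -> - PI < th <= PI -> Carg (r * cos th, r * sin th) = th.
Proof.
  intros Hr Hth. unfold Carg; simpl. pose proof PI_RGT_0.
  assert (Htan : forall x, cos x <> 0 -> r * sin x / (r * cos x) = tan x).
  { intros. unfold tan. field. split; lra. }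
  destruct (Rlt_dec 0 (r * cos th)) as [Hc|Hc].
  - assert (0 < cos th) by nra.
    rewrite Htan by lra. apply atan_tan.
    destruct (Rle_lt_dec th (-(PI/2))).
    + exfalso. assert (0 <= cos (th + PI)) by (apply cos_ge_0; lra).
      rewrite neg_cos in H1. lra.
    + destruct (Rle_lt_dec (PI/2) th). exfalso. assert (cos th <= 0) by (apply cos_le_0; lra). lra.
      lra.
  - destruct (Rlt_dec (r * cos th) 0) as [Hc2|Hc2].
    + assert (cos th < 0) by nra.
      destruct (Rle_dec 0 (r * sin th)) as [Hs|Hs].
      * assert (0 <= sin th) by nra.
        rewrite Htan by lra.
        assert (PI/2 < th). { destruct (Rle_lt_dec th (PI/2)); auto. exfalso.
          destruct (Rle_lt_dec th (-(PI/2))).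
          - assert (sin th < 0). { apply sin_lt_0_var; lra. } 
            assert (th = - PI) by (destruct (Req_dec th (-PI)); auto; nra). lra.
          - assert (0 <= cos th) by (apply cos_ge_0; lra). lra. }
        replace (tan th) with (tan (th - PI)) by (rewrite <- tan_addPI; [f_equal; ring| rewrite cos_minus, cos_PI, sin_PI; lra]).
        rewrite atan_tan by lra. ring.
      * assert (sin th < 0) by nra.
        rewrite Htan by lra.
        assert (th < - (PI/2)). { destruct (Rle_lt_dec (-(PI/2)) th); auto. exfalso.
          destruct (Rle_lt_dec th 0).
          - assert (0 <= cos th) by (apply cos_ge_0; lra). lra.
          - assert (0 <= sin th) by (apply sin_ge_0; lra). lra. }
        rewrite <- tan_addPI by lra.
        rewrite atan_tan by lra. ring.
    + assert (Hc0 : cos th = 0) by nra.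
      assert (th = PI/2 \/ th = -(PI/2)).
      { destruct (Rlt_le_dec th (-(PI/2))).
        - assert (Hq : 0 < cos (th + PI)) by (apply cos_gt_0; lra).
          rewrite neg_cos in Hq. lra.
        - destruct (Rle_lt_dec th (PI/2)).
          + destruct (Req_dec th (PI/2)); auto. destruct (Req_dec th (-(PI/2))); auto.
            assert (0 < cos th) by (apply cos_gt_0; lra). lra.
          + assert (cos th < 0) by (apply cos_lt_0; lra). lra. }
      destruct H0; subst th.
      * rewrite sin_PI2, cos_PI2 in *. 
        repeat match goal with |- context [Rlt_dec ?a ?b] => destruct (Rlt_dec a b) end; try lra.
      * rewrite sin_neg, sin_PI2, cos_neg, cos_PI2 in *.
        repeat match goal with |- context [Rlt_dec ?a ?b] => destruct (Rlt_dec a b) end; try lra.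
Qed.

Lemma Carg_neg_im z : Im z < 0 -> Carg z = - (PI/2) - atan (Re z / Im z).
Proof.
  destruct z as [x y]. unfold Carg, Re, Im; cbn [fst snd]. intro Hy.
  destruct (Rlt_dec 0 x).
  - replace (x / y) with (- / (- (y/x))) by (field; lra).
    rewrite atan_opp, atan_inv.
    rewrite atan_opp. lra.
    apply Ropp_gt_lt_0_contravar; apply Rdiv_neg_pos; lra.
  - destruct (Rlt_dec x 0).
    + destruct (Rle_dec 0 y); [lra|].
      replace (x / y) with (/ (y/x)) by (field; lra).
      rewrite atan_inv by (apply Rdiv_neg_neg; lra). lra.
    + destruct (Rlt_dec 0 y); [lra|]. destruct (Rlt_dec y 0); [|lra].
      assert (x = 0) by lra. subst. unfold Rdiv. rewrite Rmult_0_l, atan_0. lra.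
Qed.

Definition Gs (w : C) : C := (sqrt ((Cmod w + Re w)/2), - sqrt ((Cmod w - Re w)/2)).

Lemma exp_half_ln r : 0 < r -> exp (/2 * ln r) = sqrt r.
Proof. intro. rewrite <- Rpower_sqrt by auto. reflexivity. Qed.

Lemma Csqrt_G w : Im w < 0 -> Csqrt w = Gs w.
Proof.
  intro Hw.
  assert (Hw0 : w <> 0%C). { intro E. subst. simpl in Hw. lra. }
  destruct (polar1 w Hw0) as [Hre Him].
  pose proof (Carg_range w) as Hrg.
  assert (Hr : 0 < Cmod w) by (apply Cmod_gt_0; auto).
  set (r := Cmod w) in *. set (th := Carg w) in *.
  assert (Hth : th < 0).
  { destruct (Rle_lt_dec 0 th); auto. assert (0 <= sin th) by (apply sin_ge_0; lra). nra. }
  unfold Csqrt, Defs.Cpow. destruct (Ceq_dec w 0) as [E|_]; [contradiction|].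
  unfold Cexp, Clog, Gs. cbn [Re Im fst snd RtoC Cmult]. fold r th.
  replace (1/2 * ln r - 0 * th) with (/2 * ln r) by field.
  replace (1/2 * th + 0 * ln r) with (th/2) by field.
  rewrite exp_half_ln by auto.
  assert (Hc : 0 < cos (th/2)) by (apply cos_gt_0; lra).
  assert (Hs : sin (th/2) < 0) by (apply sin_lt_0_var; lra).
  assert (Hc2 : cos th = 2 * cos (th/2) * cos (th/2) - 1) by (rewrite <- cos_2a_cos; f_equal; field).
  assert (Hs2 : cos th = 1 - 2 * sin (th/2) * sin (th/2)) by (rewrite <- cos_2a_sin; f_equal; field).
  pose proof (sqrt_lt_R0 r Hr). pose proof (sqrt_sqrt r (Rlt_le _ _ Hr)).
  f_equal.
  - symmetry. apply sqrt_lem_1.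
    + rewrite Hre. nra.
    + apply Rmult_le_pos; lra.
    + rewrite Hre. replace (sqrt r * cos (th/2) * (sqrt r * cos (th/2))) with (sqrt r * sqrt r * (cos (th/2) * cos (th/2))) by ring.
      rewrite H0. nra.
  - replace (sqrt r * sin (th/2)) with (- (sqrt r * - sin (th/2))) by ring. f_equal.
    symmetry. apply sqrt_lem_1.
    + rewrite Hre. nra.
    + apply Rmult_le_pos; lra.
    + rewrite Hre. replace (sqrt r * - sin (th/2) * (sqrt r * - sin (th/2))) with (sqrt r * sqrt r * (sin (th/2) * sin (th/2))) by ring.
      rewrite H0. nra.
Qed.

Lemma R_lim_unique (G : (R -> Prop) -> Prop) (l : R) :
  ProperFilter G -> filterlim (fun x => x) G (locally l) -> R_complete_lim G = l.
Proof.
  intros PG Hl.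
  assert (Hc : cauchy G).
  { intro eps. exists l. apply Hl. exists eps. auto. }
  pose proof (@complete_cauchy R_CompleteSpace G PG Hc) as HC.
  change (lim G) with (R_complete_lim G) in HC.
  apply Rminus_diag_uniq. apply Rabs_eq_0.
  apply Rle_antisym; [|apply Rabs_pos].
  apply Rnot_lt_le. intro Hpos.
  set (e := mkposreal _ (Rlt_R0_R2)). 
  assert (Hd : 0 < Rabs (R_complete_lim G - l) / 2) by lra.
  specialize (HC (mkposreal _ Hd)).
  assert (H2 : G (ball l (mkposreal _ Hd))). { apply Hl. exists (mkposreal _ Hd). auto. }
  destruct (filter_ex _ (filter_and _ _ HC H2)) as [z [Hz1 Hz2]].
  revert Hz1 Hz2. unfold ball; simpl. unfold AbsRing_ball, abs, minus, plus, opp; simpl.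
  intros Hz1 Hz2.
  pose proof (Rabs_triang (R_complete_lim G - z) (z - l)).
  replace (R_complete_lim G - z + (z - l)) with (R_complete_lim G - l) in H by ring.
  rewrite <- Rabs_Ropp in Hz1. replace (- (z + - R_complete_lim G)) with (R_complete_lim G - z) in Hz1 by ring.
  replace (z + - l) with (z - l) in Hz2 by ring. lra.
Qed.

Lemma ballR (x : R) (e : posreal) y : Rabs (y - x) < e -> ball x e y.
Proof. intro H. exact H. Qed.

Lemma within_sector_proper (t0 : C) : 0 <= Re t0 -> Im t0 <= 0 ->
  ProperFilter (within open_sector (locally (t0 : C_CompleteNormedModule))).
Proof.
  intros H1 H2. constructor.
  - intros P [eps He].
    set (d := eps / 2).
    assert (Hd : 0 < d) by (unfold d; destruct eps; simpl; lra).
    exists (Re t0 + d, Im t0 - d). apply He.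
    + pose proof (cond_pos eps). destruct t0 as [r r0]; simpl in *. split; apply ballR.
      * cbn [fst snd]. replace (r + d - r) with d by ring. rewrite Rabs_pos_eq by lra. unfold d; lra.
      * cbn [fst snd]. replace (r0 - d - r0) with (-d) by ring. rewrite Rabs_Ropp, Rabs_pos_eq by lra. unfold d; lra.
    + apply sector_iff. simpl. lra.
  - apply within_filter. apply locally_filter.
Qed.

Lemma Re_xi_lim (t0 : C) (g : C -> R) :
  ~ open_sector t0 -> 0 <= Re t0 -> Im t0 <= 0 ->
  (forall t, open_sector t -> Re (xi_formula t) = g t) ->
  filterlim g (locally (t0 : C_UniformSpace)) (locally (g t0)) ->
  Re (xi t0) = g t0.
Proof.
  intros Hn H1 H2 Heq Hc. unfold xi.
  destruct (excluded_middle_informative (open_sector t0)) as [Hs|_]; [contradiction|].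
  pose proof (within_sector_proper t0 H1 H2) as PF.
  match goal with |- Re (@lim ?T ?F) = _ => change (Re (@lim T F)) with (R_complete_lim (fun P => F (fun z => P (Re z)))) end.
  refine (R_lim_unique (filtermap (fun z => Re (xi_formula z)) (within open_sector (locally (t0:C_CompleteNormedModule)))) _ (filtermap_proper_filter _ _ _ _ PF) _).
  assert (Hf : filterlim (fun z => Re (xi_formula z)) (within open_sector (locally (t0:C_CompleteNormedModule))) (locally (g t0))).
  { apply (filterlim_within_ext open_sector g). intros; symmetry; auto.
    intros Q HQ. specialize (Hc Q HQ). unfold filtermap, within in *. revert Hc; apply filter_imp; auto. }
  exact Hf.
Qed.

Lemma Im_xi_lim (t0 : C) (g : C -> R) :
  ~ open_sector t0 -> 0 <= Re t0 -> Im t0 <= 0 ->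
  (forall t, open_sector t -> Im (xi_formula t) = g t) ->
  filterlim g (locally (t0 : C_UniformSpace)) (locally (g t0)) ->
  Im (xi t0) = g t0.
Proof.
  intros Hn H1 H2 Heq Hc. unfold xi.
  destruct (excluded_middle_informative (open_sector t0)) as [Hs|_]; [contradiction|].
  pose proof (within_sector_proper t0 H1 H2) as PF.
  match goal with |- Im (@lim ?T ?F) = _ => change (Im (@lim T F)) with (R_complete_lim (fun P => F (fun z => P (Im z)))) end.
  refine (R_lim_unique (filtermap (fun z => Im (xi_formula z)) (within open_sector (locally (t0:C_CompleteNormedModule)))) _ (filtermap_proper_filter _ _ _ _ PF) _).
  assert (Hf : filterlim (fun z => Im (xi_formula z)) (within open_sector (locally (t0:C_CompleteNormedModule))) (locally (g t0))).
  { apply (filterlim_within_ext open_sector g). intros; symmetry; auto.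
    intros Q HQ. specialize (Hc Q HQ). unfold filtermap, within in *. revert Hc; apply filter_imp; auto. }
  exact Hf.
Qed.

Definition Wm (x y : R) : R := sqrt ((x*x - y*y - 1)^2 + (2*x*y)^2).
Definition S1 (x y : R) : R := sqrt ((Wm x y + (x*x - y*y - 1))/2).
Definition S2 (x y : R) : R := - sqrt ((Wm x y - (x*x - y*y - 1))/2).
Definition Rfun2 (x y : R) : R :=
  1/2 * ((x * S1 x y - y * S2 x y) - ln (sqrt ((x + S1 x y)^2 + (y + S2 x y)^2))).
Definition Ifun2 (x y : R) : R :=
  1/2 * ((x * S2 x y + y * S1 x y) - (- (PI/2) - atan ((x + S1 x y) / (y + S2 x y)))).

Lemma sq_eq x y : Cminus (Cmult (x,y) (x,y)) 1 = (x*x - y*y - 1, 2*x*y).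
Proof. unfold Cminus, Cmult, Cplus, Copp, RtoC; simpl. f_equal; ring. Qed.

Lemma Gs_sq x y : Gs (x*x - y*y - 1, 2*x*y) = (S1 x y, S2 x y).
Proof. unfold Gs, S1, S2, Wm, Cmod, Re; cbn [fst snd]. reflexivity. Qed.

Lemma Re_xif x y : open_sector (x,y) -> Re (xi_formula (x,y)) = Rfun2 x y.
Proof.
  intro Hs. apply sector_iff in Hs. simpl in Hs.
  unfold xi_formula. rewrite sq_eq, Csqrt_G by (simpl; nra). rewrite Gs_sq.
  unfold Rfun2, Defs.Clog, Cmod. cbn [Re Im fst snd Cmult Cminus Cplus Copp RtoC].
  ring.
Qed.

Lemma S2_nonpos x y : S2 x y <= 0.
Proof. unfold S2. pose proof (sqrt_pos ((Wm x y - (x * x - y * y - 1)) / 2)). lra. Qed.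

Lemma Im_xif x y : open_sector (x,y) -> Im (xi_formula (x,y)) = Ifun2 x y.
Proof.
  intro Hs. apply sector_iff in Hs. simpl in Hs.
  unfold xi_formula. rewrite sq_eq, Csqrt_G by (simpl; nra). rewrite Gs_sq.
  unfold Ifun2, Defs.Clog, Cmod.
  rewrite (Carg_neg_im (Cplus (x,y) (S1 x y, S2 x y))) by (simpl; pose proof (S2_nonpos x y); lra). cbn [Re Im fst snd Cmult Cminus Cplus Copp RtoC].
  ring.
Qed.

Lemma cpt_pow2 r : continuity_pt (fun z => z ^ 2) r.
Proof. apply derivable_continuous_pt. apply derivable_pt_pow. Qed.
Lemma cpt_ln r : 0 < r -> continuity_pt ln r.
Proof. intro. apply continuity_pt_filterlim. apply continuous_ln. auto. Qed.
Lemma cpt_atan r : continuity_pt atan r.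
Proof. apply continuity_pt_filterlim. apply (continuous_atan_comp (fun z => z)). apply continuous_id. Qed.
Lemma cpt_inv r : r <> 0 -> continuity_pt Rinv r.
Proof. intro. apply continuity_pt_inv. apply continuity_pt_id. auto. Qed.

Lemma sqrt_sum_ge a b : Rabs a <= sqrt (a^2 + b^2).
Proof. rewrite <- sqrt_Rsqr_abs. apply sqrt_le_1_alt. unfold Rsqr. nra. Qed.

Ltac cont :=
  repeat (first [ apply continuity_2d_pt_plus | apply continuity_2d_pt_minus
                | apply continuity_2d_pt_mult | apply continuity_2d_pt_opp
                | apply continuity_2d_pt_id1 | apply continuity_2d_pt_id2
                | apply continuity_2d_pt_const
                | apply (continuity_1d_2d_pt_comp (fun z => z ^ 2)); [apply cpt_pow2|] ]).

Lemma cont_Wm x y : continuity_2d_pt Wm x y.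
Proof.
  unfold Wm. apply (continuity_1d_2d_pt_comp sqrt).
  - apply continuity_pt_sqrt. apply Rplus_le_le_0_compat; apply pow2_ge_0.
  - cont.
Qed.

Lemma cont_S1 x y : continuity_2d_pt S1 x y.
Proof.
  unfold S1. apply (continuity_1d_2d_pt_comp sqrt).
  - apply continuity_pt_sqrt. pose proof (sqrt_sum_ge (x*x-y*y-1) (2*x*y)). unfold Wm.
    pose proof (Rle_abs (- (x*x-y*y-1))). rewrite Rabs_Ropp in H0. lra.
  - unfold Rdiv. cont. apply cont_Wm.
Qed.

Lemma cont_S2 x y : continuity_2d_pt S2 x y.
Proof.
  unfold S2. apply continuity_2d_pt_opp. apply (continuity_1d_2d_pt_comp sqrt).
  - apply continuity_pt_sqrt. pose proof (sqrt_sum_ge (x*x-y*y-1) (2*x*y)). unfold Wm.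
    pose proof (Rle_abs (x*x-y*y-1)). lra.
  - unfold Rdiv. cont. apply cont_Wm.
Qed.

Ltac cont2 :=
  repeat (first [ apply cont_S1 | apply cont_S2 | apply continuity_2d_pt_plus | apply continuity_2d_pt_minus
                | apply continuity_2d_pt_mult | apply continuity_2d_pt_opp
                | apply continuity_2d_pt_id1 | apply continuity_2d_pt_id2
                | apply continuity_2d_pt_const
                | apply (continuity_1d_2d_pt_comp (fun z => z ^ 2)); [apply cpt_pow2|] ]).

Lemma cont_Rfun2 x y : 0 < (x + S1 x y)^2 + (y + S2 x y)^2 -> continuity_2d_pt Rfun2 x y.
Proof.
  intro Hp. unfold Rfun2. cont2.
  apply (continuity_1d_2d_pt_comp ln).
  - apply cpt_ln. apply sqrt_lt_R0. auto.
  - apply (continuity_1d_2d_pt_comp sqrt). apply continuity_pt_sqrt; lra.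
    cont2.
Qed.

Lemma cont_Ifun2 x y : y + S2 x y <> 0 -> continuity_2d_pt Ifun2 x y.
Proof.
  intro Hp. unfold Ifun2. cont2.
  apply (continuity_1d_2d_pt_comp atan). apply cpt_atan.
  unfold Rdiv. cont2.
  apply (continuity_1d_2d_pt_comp Rinv). apply cpt_inv; auto.
  cont2.
Qed.

Lemma Re_xi_bd (t0 : C) : ~ open_sector t0 -> 0 <= Re t0 -> Im t0 <= 0 ->
  0 < (fst t0 + S1 (fst t0) (snd t0))^2 + (snd t0 + S2 (fst t0) (snd t0))^2 ->
  Re (xi t0) = Rfun2 (fst t0) (snd t0).
Proof.
  intros Hn H1 H2 Hp.
  apply (Re_xi_lim t0 (fun z => Rfun2 (fst z) (snd z))); auto.
  - intros [x y] Hs. apply Re_xif. auto.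
  - destruct t0 as [x y]. apply continuity_2d_pt_filterlim. apply cont_Rfun2. auto.
Qed.

Lemma Im_xi_bd (t0 : C) : ~ open_sector t0 -> 0 <= Re t0 -> Im t0 <= 0 ->
  snd t0 + S2 (fst t0) (snd t0) <> 0 ->
  Im (xi t0) = Ifun2 (fst t0) (snd t0).
Proof.
  intros Hn H1 H2 Hp.
  apply (Im_xi_lim t0 (fun z => Ifun2 (fst z) (snd z))); auto.
  - intros [x y] Hs. apply Im_xif. auto.
  - destruct t0 as [x y]. apply continuity_2d_pt_filterlim. apply cont_Ifun2. auto.
Qed.

Lemma sqrt0' : sqrt 0 = 0. Proof. apply sqrt_0. Qed.

Lemma S_real_ge1 s : 1 <= s -> S1 s 0 = sqrt (s*s - 1) /\ S2 s 0 = 0.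
Proof.
  intro Hs. unfold S1, S2, Wm.
  replace ((s * s - 0 * 0 - 1) ^ 2 + (2 * s * 0) ^ 2) with ((s*s-1)*(s*s-1)) by ring.
  rewrite sqrt_square by nra.
  replace ((s * s - 1 + (s * s - 0 * 0 - 1)) / 2) with (s*s-1) by field.
  replace ((s * s - 1 - (s * s - 0 * 0 - 1)) / 2) with 0 by field.
  rewrite sqrt_0. split; [reflexivity| ring].
Qed.

Lemma S_real_le1 s : 0 <= s <= 1 -> S1 s 0 = 0 /\ S2 s 0 = - sqrt (1 - s*s).
Proof.
  intro Hs. unfold S1, S2, Wm.
  replace ((s * s - 0 * 0 - 1) ^ 2 + (2 * s * 0) ^ 2) with ((1 - s*s)*(1 - s*s)) by ring.
  rewrite sqrt_square by nra.
  replace ((1 - s * s + (s * s - 0 * 0 - 1)) / 2) with 0 by field.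
  replace ((1 - s * s - (s * s - 0 * 0 - 1)) / 2) with (1 - s*s) by field.
  rewrite sqrt_0. split; reflexivity.
Qed.

Lemma S_imag s : S1 0 (-s) = 0 /\ S2 0 (-s) = - sqrt (1 + s*s).
Proof.
  unfold S1, S2, Wm.
  replace ((0 * 0 - - s * - s - 1) ^ 2 + (2 * 0 * - s) ^ 2) with ((1 + s*s)*(1 + s*s)) by ring.
  pose proof (Rle_0_sqr s). unfold Rsqr in H.
  rewrite sqrt_square by nra.
  replace ((1 + s * s + (0 * 0 - - s * - s - 1)) / 2) with 0 by field.
  replace ((1 + s * s - (0 * 0 - - s * - s - 1)) / 2) with (1 + s*s) by field.
  rewrite sqrt_0. split; reflexivity.
Qed.

Lemma not_sector_real s : ~ open_sector (s, 0).
Proof. rewrite sector_iff. simpl. lra. Qed.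
Lemma not_sector_imag s : ~ open_sector (0, s).
Proof. rewrite sector_iff. simpl. lra. Qed.

Lemma Re_xi_real_ge1 s : 1 <= s ->
  Re (xi (s, 0)) = 1/2 * (s * sqrt (s*s - 1) - ln (s + sqrt (s*s - 1))).
Proof.
  intro Hs. destruct (S_real_ge1 s Hs) as [E1 E2].
  pose proof (sqrt_pos (s*s-1)).
  rewrite Re_xi_bd; simpl; auto using not_sector_real; try lra.
  - unfold Rfun2. rewrite E1, E2.
    replace ((s + sqrt (s * s - 1)) ^ 2 + (0 + 0) ^ 2) with ((s + sqrt (s * s - 1)) * (s + sqrt (s * s - 1))) by ring.
    rewrite sqrt_square by lra. ring.
  - rewrite E1, E2. nra.
Qed.

Lemma Re_xi_real_le1 s : 0 <= s <= 1 -> Re (xi (s, 0)) = 0.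
Proof.
  intro Hs. destruct (S_real_le1 s Hs) as [E1 E2].
  assert (Hq : sqrt (1 - s*s) * sqrt (1 - s*s) = 1 - s*s) by (apply sqrt_sqrt; nra).
  rewrite Re_xi_bd; simpl; auto using not_sector_real; try lra.
  - unfold Rfun2. rewrite E1, E2.
    replace ((s + 0) ^ 2 + (0 + - sqrt (1 - s * s)) ^ 2) with 1 by nra.
    rewrite sqrt_1, ln_1. ring.
  - rewrite E1, E2. nra.
Qed.

Lemma Re_xi_imag s : 0 <= s ->
  Re (xi (0, -s)) = - (1/2) * (s * sqrt (1 + s*s) + ln (s + sqrt (1 + s*s))).
Proof.
  intro Hs. destruct (S_imag s) as [E1 E2].
  assert (Hq : 0 < sqrt (1 + s*s)) by (apply sqrt_lt_R0; nra).
  rewrite Re_xi_bd; simpl; auto using not_sector_imag; try lra.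
  - unfold Rfun2. rewrite E1, E2.
    replace ((0 + 0) ^ 2 + (- s + - sqrt (1 + s * s)) ^ 2) with ((s + sqrt (1 + s * s)) * (s + sqrt (1 + s * s))) by ring.
    rewrite sqrt_square by lra. ring.
  - rewrite E1, E2. nra.
Qed.

Lemma xi_zero_Re : Re (xi (0,0)) = 0.
Proof.
  replace (0,0) with (0, -0) by (f_equal; ring).
  rewrite Re_xi_imag by lra. replace (0*0) with 0 by ring. rewrite Rplus_0_r, sqrt_1, Rplus_0_l, ln_1. ring.
Qed.

Lemma xi_zero_Im : Im (xi (0,0)) = PI/4.
Proof.
  replace (0,0) with (0, -0) by (f_equal; ring).
  destruct (S_imag 0) as [E1 E2].
  replace (1 + 0*0) with 1 in E2 by ring. rewrite sqrt_1 in E2.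
  rewrite Im_xi_bd; simpl; auto using not_sector_imag; try lra.
  - unfold Ifun2. rewrite E1, E2. replace ((0 + 0) / (- 0 + - (1))) with 0 by field. rewrite atan_0. field.
Qed.

Section S.
Variables a b rho phi : R.
Definition mf x := sqrt ((x*x - a)^2 + b^2).
Definition Pf x := sqrt ((mf x + (x*x - a))/2).
Definition Qf x := sqrt ((mf x - (x*x - a))/2).
Definition Ft x := 1/2 * x * Pf x - 1/4 * a * ln ((x + Pf x)^2 + Qf x ^2)
   + 1/2 * b * atan (- Qf x / (x + Pf x)) + 1/4 * a * ln rho - 1/4 * b * phi.

Lemma PQ_facts x : 0 < b ->
  let m := sqrt ((x * x + - a) * ((x * x + - a) * 1) + b * (b * 1)) in
  let P := sqrt ((m + (x * x + - a)) * / 2) in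
  let Q := sqrt ((m + - (x * x + - a)) * / 2) in
  0 < m /\ 0 < P /\ 0 < Q /\ m = P*P + Q*Q /\ x*x - a = P*P - Q*Q /\ b = 2*P*Q.
Proof.
  intros Hb m P Q.
  set (u := x*x + - a) in *.
  assert (HM : 0 < u * (u * 1) + b * (b * 1)) by nra.
  assert (Hm : 0 < m) by (apply sqrt_lt_R0; auto).
  assert (Hmm : m * m = u * (u * 1) + b * (b * 1)) by (apply sqrt_sqrt; lra).
  assert (Hm1 : u < m) by nra.
  assert (Hm2 : - u < m) by nra.
  assert (HP : P * P = (m + u) * / 2) by (apply sqrt_sqrt; nra).
  assert (HQ : Q * Q = (m + - u) * / 2) by (apply sqrt_sqrt; nra).
  assert (HP0 : 0 < P) by (apply sqrt_lt_R0; nra).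
  assert (HQ0 : 0 < Q) by (apply sqrt_lt_R0; nra).
  repeat split; auto.
  - nra.
  - unfold u in *. nra.
  - assert (Hb2 : (2*P*Q) * (2*P*Q) = b * b).
    { replace ((2*P*Q) * (2*P*Q)) with (4 * (P*P) * (Q*Q)) by ring. rewrite HP, HQ. nra. }
    symmetry. apply Rsqr_inj; unfold Rsqr; try lra. assert (0 < P*Q) by nra. lra.
Qed.

Lemma Ft_der x : 0 < b -> 0 <= x -> is_derive Ft x (Pf x).
Proof.
  intros Hb Hx. unfold Ft, Pf, Qf, mf.
  auto_derive; destruct (PQ_facts x Hb) as (Hm & HP & HQ & Em & Ea & Eb);
  set (m := sqrt ((x * x + - a) * ((x * x + - a) * 1) + b * (b * 1))) in *;
  set (P := sqrt ((m + (x * x + - a)) * / 2)) in *;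
  set (Q := sqrt ((m + - (x * x + - a)) * / 2)) in *.
  - assert (0 < b * (b*1)) by nra.
    assert (0 <= (x * x + - a) * ((x * x + - a) * 1)) by (rewrite Rmult_1_r; apply Rle_0_sqr).
    assert (0 < P*P) by nra. assert (0 < Q * Q) by nra.
    repeat split; try nra.
  - assert (ER : sqrt ((sqrt ((x * x - a) ^ 2 + b ^ 2) + (x * x - a)) / 2) = P).
    { assert (E1 : (x * x - a) ^ 2 + b ^ 2 = (x * x + - a) * ((x * x + - a) * 1) + b * (b * 1)) by ring.
      rewrite E1. fold m. replace ((m + (x * x - a)) / 2) with ((m + (x * x + - a)) * / 2) by (unfold Rdiv; ring).
      reflexivity. }
    rewrite ER. clearbody m P Q. 
    replace a with (x*x - P*P + Q*Q) by lra. subst b. subst m.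
    field. repeat split; nra.
Qed.
End S.

Lemma S_facts x y : x * y < 0 ->
  0 < S1 x y /\ S2 x y < 0 /\ S1 x y * S1 x y - S2 x y * S2 x y = x*x - y*y - 1
  /\ S1 x y * S2 x y = x * y.
Proof.
  intro Hxy. unfold S1, S2.
  set (w1 := x*x - y*y - 1). set (W := Wm x y).
  assert (HW : W * W = w1^2 + (2*x*y)^2) by (apply sqrt_sqrt; nra).
  assert (HW0 : 0 <= W) by apply sqrt_pos.
  assert (Hw1 : w1 < W) by nra. assert (Hw2 : - w1 < W) by nra.
  assert (E1 : sqrt ((W + w1)/2) * sqrt ((W + w1)/2) = (W + w1)/2) by (apply sqrt_sqrt; lra).
  assert (E2 : sqrt ((W - w1)/2) * sqrt ((W - w1)/2) = (W - w1)/2) by (apply sqrt_sqrt; lra).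
  assert (P1 : 0 < sqrt ((W + w1)/2)) by (apply sqrt_lt_R0; lra).
  assert (P2 : 0 < sqrt ((W - w1)/2)) by (apply sqrt_lt_R0; lra).
  repeat split; try lra.
  - set (p := sqrt ((W + w1)/2)) in *. set (q := sqrt ((W - w1)/2)) in *.
    assert (Hpq : (p*q) * (p*q) = (x*y) * (x*y)).
    { replace ((p*q)*(p*q)) with ((p*p)*(q*q)) by ring. rewrite E1, E2. nra. }
    assert (p * - q = x * y). 
    { replace (p * - q) with (- (p*q)) by ring. replace (x*y) with (- (- (x*y))) by ring. f_equal.
      apply Rsqr_inj; unfold Rsqr; nra. }
    auto.
Qed.

Lemma PQf_facts a b x : 0 < b ->
  0 < mf a b x /\ 0 < Pf a b x /\ 0 < Qf a b x /\ mf a b x = Pf a b x * Pf a b x + Qf a b x * Qf a b x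
  /\ x*x - a = Pf a b x * Pf a b x - Qf a b x * Qf a b x /\ b = 2 * Pf a b x * Qf a b x.
Proof.
  intro Hb. destruct (PQ_facts a b x Hb) as (H1 & H2 & H3 & H4 & H5 & H6).
  assert (Em : mf a b x = sqrt ((x * x + - a) * ((x * x + - a) * 1) + b * (b * 1))) by (unfold mf; f_equal; ring).
  assert (EP : Pf a b x = sqrt ((sqrt ((x * x + - a) * ((x * x + - a) * 1) + b * (b * 1)) + (x * x + - a)) * / 2))
    by (unfold Pf; rewrite Em; f_equal; unfold Rdiv; ring).
  assert (EQ : Qf a b x = sqrt ((sqrt ((x * x + - a) * ((x * x + - a) * 1) + b * (b * 1)) + - (x * x + - a)) * / 2))
    by (unfold Qf; rewrite Em; f_equal; unfold Rdiv; ring).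
  rewrite Em, EP, EQ. repeat split; auto.
Qed.

Lemma sq_uniq u1 u2 v1 v2 : 0 < u1 -> 0 < v1 ->
  u1*u1 - u2*u2 = v1*v1 - v2*v2 -> u1*u2 = v1*v2 -> u1 = v1 /\ u2 = v2.
Proof.
  intros H1 H2 E1 E2.
  assert (u2 = v1 * v2 / u1). { apply (Rmult_eq_reg_l u1). rewrite E2. field. lra. lra. }
  subst u2.
  assert (E3 : (u1*u1 - v1*v1) * (u1*u1 + v2*v2) = 0).
  { assert (E1' : u1*u1*(u1*u1) - v1*v2*(v1*v2) = (v1*v1 - v2*v2)*(u1*u1)).
    { rewrite <- E1. field. lra. }
    replace ((u1*u1 - v1*v1) * (u1*u1 + v2*v2)) with (u1*u1*(u1*u1) - v1*v2*(v1*v2) - (v1*v1 - v2*v2)*(u1*u1)) by ring.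
    rewrite E1'. ring. }
  apply Rmult_integral in E3. destruct E3 as [E3|E3]; [|nra].
  assert (u1 = v1) by nra. subst. split; auto. field. lra.
Qed.

Lemma ln_sqrt' D : 0 < D -> ln (sqrt D) = ln D / 2.
Proof.
  intro HD. assert (Hs : 0 < sqrt D) by (apply sqrt_lt_R0; auto).
  rewrite <- (sqrt_sqrt D) at 2 by lra. rewrite ln_mult by auto. field.
Qed.

Lemma key_b a b x sr c d al :
  0 < sr -> 0 < al < PI/2 -> c = cos al -> d = sin al ->
  a = sr*sr*(c*c - d*d) -> b = sr*sr*(2*c*d) -> 0 < x ->
  a * Rfun2 (x*/sr*c) (-(x*/sr*d)) - b * Ifun2 (x*/sr*c) (-(x*/sr*d)) =
  1/2 * x * Pf a b x - 1/4 * a * ln ((x + Pf a b x)^2 + Qf a b x ^2)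
   + 1/2 * b * atan (- Qf a b x / (x + Pf a b x)) + 1/2 * a * ln sr - 1/2 * b * al.
Proof.
  intros Hsr Hal Hc Hd Ha Hb Hx.
  pose proof PI_RGT_0.
  assert (Hc0 : 0 < c) by (rewrite Hc; apply cos_gt_0; lra).
  assert (Hd0 : 0 < d) by (rewrite Hd; apply sin_gt_0; lra).
  assert (Hcd : c*c + d*d = 1) by (rewrite Hc, Hd; pose proof (sin2_cos2 al); unfold Rsqr in *; lra).
  assert (Hb0 : 0 < b) by (rewrite Hb; apply Rmult_lt_0_compat; nra).
  set (k := / sr).
  assert (Hk : 0 < k) by (apply Rinv_0_lt_compat; auto).
  assert (Hks : sr * k = 1) by (unfold k; field; lra).
  set (t1 := x*k*c). set (t2 := -(x*k*d)).
  assert (Ht : t1*t2 < 0).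
  { unfold t1, t2. assert (Hxk : 0 < x*k) by (apply Rmult_lt_0_compat; auto).
    replace (x*k*c * -(x*k*d)) with (-((x*k)*(x*k)*(c*d))) by ring.
    assert (0 < (x*k)*(x*k)*(c*d)) by (repeat apply Rmult_lt_0_compat; auto). lra. }
  destruct (S_facts t1 t2 Ht) as (HS1 & HS2 & ES1 & ES2).
  destruct (PQf_facts a b x Hb0) as (Hm & HP & HQ & Em & Ea & Eb).
  set (S1v := S1 t1 t2) in *. set (S2v := S2 t1 t2) in *.
  set (P := Pf a b x) in *. set (Q := Qf a b x) in *.
  assert (V : sr*(c*S1v - d*S2v) = P /\ sr*(c*S2v + d*S1v) = -Q).
  { apply sq_uniq.
    - apply Rmult_lt_0_compat; nra.
    - auto.
    - replace (sr * (c * S1v - d * S2v) * (sr * (c * S1v - d * S2v)) - sr * (c * S2v + d * S1v) * (sr * (c * S2v + d * S1v)))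
        with (sr*sr*((c*c-d*d)*(S1v*S1v - S2v*S2v) - 4*c*d*(S1v*S2v))) by ring.
      rewrite ES1, ES2. unfold t1, t2.
      replace (sr * sr * ((c * c - d * d) * (x * k * c * (x * k * c) - - (x * k * d) * - (x * k * d) - 1) -
                4 * c * d * (x * k * c * - (x * k * d))))
        with ((sr*k)*(sr*k)*(x*x)*((c*c+d*d)*(c*c+d*d)) - sr*sr*(c*c-d*d)) by ring.
      rewrite Hks, Hcd, <- Ha. lra.
    - replace (sr * (c * S1v - d * S2v) * (sr * (c * S2v + d * S1v)))
        with (sr*sr*((c*c-d*d)*(S1v*S2v) + c*d*(S1v*S1v - S2v*S2v))) by ring.
      rewrite ES1, ES2. unfold t1, t2.
      replace (sr * sr * ((c * c - d * d) * (x * k * c * - (x * k * d)) + c * d * (x * k * c * (x * k * c) - - (x * k * d) * - (x * k * d) - 1)))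
        with (- (sr*sr*c*d)) by ring.
      replace (P * - Q) with (- (2*P*Q)/2) by field. rewrite <- Eb, Hb. field. }
  destruct V as [V1 V2].
  assert (ES1v : S1v = k*(c*P - d*Q)).
  { replace Q with (- (sr*(c*S2v + d*S1v))) by lra. rewrite <- V1.
    replace (k * (c * (sr * (c * S1v - d * S2v)) - d * - (sr * (c * S2v + d * S1v)))) with ((sr*k)*(c*c+d*d)*S1v) by ring.
    rewrite Hks, Hcd. ring. }
  assert (ES2v : S2v = - (k*(c*Q + d*P))).
  { replace Q with (- (sr*(c*S2v + d*S1v))) by lra. rewrite <- V1.
    replace (- (k * (c * - (sr * (c * S2v + d * S1v)) + d * (sr * (c * S1v - d * S2v))))) with ((sr*k)*(c*c+d*d)*S2v) by ring.
    rewrite Hks, Hcd. ring. }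
  assert (Hxk : 0 < x*k) by (apply Rmult_lt_0_compat; auto).
  set (X := x + P).
  assert (HX : 0 < X) by (unfold X; lra).
  assert (Harg : -(PI/2) - atan ((t1 + S1v) / (t2 + S2v)) = atan (-Q/X) - al).
  { assert (Him : t2 + S2v < 0) by (unfold t2; nra).
    replace (-(PI/2) - atan ((t1 + S1v) / (t2 + S2v))) with (Carg (t1+S1v, t2+S2v))
      by (rewrite Carg_neg_im by (simpl; lra); reflexivity).
    assert (HXQ : ((X, -Q) : C) <> RtoC 0) by (intro E; injection E; lra).
    destruct (polar1 (X, -Q) HXQ) as [PX PQ'].
    assert (HR0 : 0 < Cmod (X, -Q)) by (apply Cmod_gt_0; auto).
    assert (Hth : Carg (X, -Q) = atan (-Q/X)).
    { unfold Carg; simpl. destruct (Rlt_dec 0 X); [reflexivity| lra]. }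
    rewrite Hth in PX, PQ'. simpl in PX, PQ'.
    set (R0 := Cmod (X, -Q)) in *. set (th := atan (-Q/X)) in *.
    assert (Epair : (t1+S1v, t2+S2v) = (k*R0 * cos (th - al), k*R0 * sin (th - al))).
    { rewrite cos_minus, sin_minus, <- Hc, <- Hd. f_equal.
      - replace (k*R0*(cos th * c + sin th * d)) with (k*(c*(R0*cos th) + d*(R0*sin th))) by ring.
        rewrite <- PX, <- PQ'. rewrite ES1v. unfold t1, X. ring.
      - replace (k*R0*(sin th * c - cos th * d)) with (k*(c*(R0*sin th) - d*(R0*cos th))) by ring.
        rewrite <- PX, <- PQ'. rewrite ES2v. unfold t2, X. ring. }
    rewrite Epair. apply Carg_polar.
    - apply Rmult_lt_0_compat; auto.
    - pose proof (atan_bound (-Q/X)). fold th in H0. lra. }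
  assert (Hln : ln (sqrt ((t1 + S1v)^2 + (t2 + S2v)^2)) = - ln sr + ln ((x+P)^2 + Q^2) / 2).
  { assert (HD : 0 < (x+P)^2 + Q^2) by nra.
    replace ((t1 + S1v)^2 + (t2 + S2v)^2) with (k*k*((x+P)^2 + Q^2)).
    2: { rewrite ES1v, ES2v. unfold t1, t2.
         transitivity (k*k*(c*c+d*d)*((x+P)^2 + Q^2)). rewrite Hcd. ring. ring. }
    rewrite sqrt_mult by nra. rewrite sqrt_square by lra.
    rewrite ln_mult by (try apply sqrt_lt_R0; auto).
    unfold k. rewrite ln_Rinv by auto. rewrite ln_sqrt' by auto. ring. }
  assert (Hprod : a*(t1*S1v - t2*S2v) - b*(t1*S2v + t2*S1v) = x*P).
  { rewrite ES1v, ES2v, Ha, Hb. unfold t1, t2.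
    transitivity ((sr*k)*(sr*k)*x*P*((c*c+d*d)*(c*c+d*d))). ring. rewrite Hks, Hcd. ring. }
  unfold Rfun2, Ifun2. change (S1 t1 t2) with S1v. change (S2 t1 t2) with S2v.
  rewrite Harg, Hln. fold X. lra.
Qed.

Lemma mu_eq (lam : C) : lam <> 0%C ->
  Defs.Cpow lam (RtoC (-1/2)) = (/ sqrt (Cmod lam) * cos (Carg lam / 2), - (/ sqrt (Cmod lam) * sin (Carg lam / 2))).
Proof.
  intro Hl. assert (Hr : 0 < Cmod lam) by (apply Cmod_gt_0; auto).
  unfold Defs.Cpow. destruct (Ceq_dec lam 0) as [E|_]; [contradiction|].
  unfold Defs.Cexp, Defs.Clog. cbn [Re Im fst snd RtoC Cmult].
  replace (-1 / 2 * ln (Cmod lam) - 0 * Carg lam) with (- (/2 * ln (Cmod lam))) by field.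
  replace (-1 / 2 * Carg lam + 0 * ln (Cmod lam)) with (- (Carg lam / 2)) by field.
  rewrite exp_Ropp, exp_half_ln by auto. rewrite cos_neg, sin_neg. f_equal. ring.
Qed.

Definition tpt (x : R) (lam : C) : C :=
  (x * (/ sqrt (Cmod lam) * cos (Carg lam / 2)), - (x * (/ sqrt (Cmod lam) * sin (Carg lam / 2)))).

Lemma h_eq (x : R) (lam : C) : lam <> 0%C ->
  h x lam = exp (Re lam * Re (xi (tpt x lam)) - Im lam * Im (xi (tpt x lam))).
Proof.
  intro Hl. unfold h. rewrite mu_eq by auto.
  replace (Cmult (RtoC x) _) with (tpt x lam) by (unfold tpt, Cmult, RtoC; simpl; f_equal; ring).
  destruct lam as [a b]. unfold Cmult. simpl. reflexivity.
Qed.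

Definition gf (s : R) := 1/2 * (s * sqrt (s*s - 1) - ln (s + sqrt (s*s - 1))).

Lemma gf_der s : 1 < s -> is_derive gf s (sqrt (s*s - 1)).
Proof.
  intro Hs. unfold gf.
  assert (H0 : 0 < s*s - 1) by nra.
  assert (Hr : 0 < sqrt (s*s-1)) by (apply sqrt_lt_R0; auto).
  assert (Hrr : sqrt (s*s-1) * sqrt (s*s-1) = s*s-1) by (apply sqrt_sqrt; lra).
  auto_derive.
  - replace (s * s + - (1)) with (s*s-1) by ring. repeat split; try lra.
  - replace (s * s + - (1)) with (s*s-1) by ring. set (r := sqrt (s*s-1)) in *.
    assert (Hsr : 0 < s + r) by lra.
    transitivity (1/2 * (r + s*s/r - 1/r)). field. split; lra.
    replace (s*s) with (r*r + 1) by lra. field. lra.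
Qed.

Lemma gf_cont s : 1 <= s -> continuity_pt gf s.
Proof.
  intro Hs. unfold gf.
  assert (Hc : continuity_pt (fun s => sqrt (s*s-1)) s).
  { apply (continuity_pt_comp (fun s => s*s-1) sqrt).
    - apply continuity_pt_minus. apply continuity_pt_mult; apply continuity_pt_id. apply continuity_pt_const. intros ? ?; auto.
    - apply continuity_pt_sqrt. nra. }
  apply continuity_pt_mult. apply continuity_pt_const. intros ? ?; auto.
  apply continuity_pt_minus.
  - apply continuity_pt_mult. apply continuity_pt_id. auto.
  - apply (continuity_pt_comp (fun s => s + sqrt (s*s-1)) ln).
    + apply continuity_pt_plus. apply continuity_pt_id. auto.
    + apply cpt_ln. pose proof (sqrt_pos (s*s-1)). lra.
Qed.

Lemma gf_mvt s1 s2 : 1 <= s1 < s2 -> exists c, s1 <= c <= s2 /\ gf s2 - gf s1 = sqrt (c*c-1) * (s2 - s1).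
Proof.
  intro Hs.
  destruct (MVT_gen gf s1 s2 (fun s => sqrt (s*s-1))) as [c [Hc E]].
  - intros x Hx. rewrite Rmin_left, Rmax_right in Hx by lra. apply gf_der. lra.
  - intros x Hx. rewrite Rmin_left, Rmax_right in Hx by lra. apply gf_cont. lra.
  - rewrite Rmin_left, Rmax_right in Hc by lra. exists c. auto.
Qed.

Lemma gf_mono s1 s2 : 1 <= s1 -> s1 < s2 -> gf s1 < gf s2.
Proof.
  intros H1 H2. set (m := (s1+s2)/2).
  destruct (gf_mvt s1 m) as [c1 [Hc1 E1]]. unfold m; lra.
  destruct (gf_mvt m s2) as [c2 [Hc2 E2]]. unfold m; lra.
  assert (0 <= sqrt (c1*c1-1)) by apply sqrt_pos.
  assert (0 < sqrt (c2*c2-1)) by (apply sqrt_lt_R0; unfold m in *; nra).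
  assert (0 <= sqrt (c1 * c1 - 1) * (m - s1)) by (apply Rmult_le_pos; unfold m in *; lra).
  assert (0 < sqrt (c2 * c2 - 1) * (s2 - m)) by (apply Rmult_lt_0_compat; unfold m in *; lra).
  lra.
Qed.

Lemma Cmod_real a : 0 < a -> Cmod (a, 0) = a.
Proof. intro. unfold Cmod; cbn [fst snd]. replace (a^2 + 0^2) with (a*a) by ring. apply sqrt_square. lra. Qed.

Lemma Carg_pos_real a : 0 < a -> Carg (a, 0) = 0.
Proof. intro. unfold Carg; cbn [Re Im fst snd]. destruct (Rlt_dec 0 a); [|lra]. unfold Rdiv. rewrite Rmult_0_l. apply atan_0. Qed.

Lemma case1 (lam : C) : lam <> 0%C -> Im lam = 0 -> 0 < Re lam ->
  (forall x y : R, sqrt (Re lam) <= x -> x < y -> h x lam < h y lam) /\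
  (forall x : R, 0 <= x <= sqrt (Re lam) -> h x lam = 1).
Proof.
  destruct lam as [a b]. simpl. intros Hl Hb Ha. subst b.
  assert (Hsa : 0 < sqrt a) by (apply sqrt_lt_R0; auto).
  assert (Ht : forall x, tpt x (a,0) = (x / sqrt a, 0)).
  { intro x. unfold tpt. rewrite Cmod_real, Carg_pos_real by auto.
    replace (0/2) with 0 by field. rewrite cos_0, sin_0. unfold Rdiv. f_equal; ring. }
  assert (Hh : forall x, h x (a,0) = exp (a * Re (xi (x / sqrt a, 0)))).
  { intro x. rewrite h_eq by auto. rewrite Ht. simpl. f_equal. ring. }
  split.
  - intros x y Hx Hxy. rewrite !Hh.
    assert (Hs1 : 1 <= x / sqrt a). { apply (Rmult_le_reg_r (sqrt a)); auto. unfold Rdiv. rewrite Rmult_assoc, Rinv_l by lra. lra. }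
    assert (Hs2 : x / sqrt a < y / sqrt a). { unfold Rdiv. apply Rmult_lt_compat_r; auto. apply Rinv_0_lt_compat; auto. }
    rewrite !Re_xi_real_ge1 by lra.
    apply exp_increasing. apply Rmult_lt_compat_l; auto. apply gf_mono; auto.
  - intros x Hx. rewrite Hh. rewrite Re_xi_real_le1. rewrite Rmult_0_r. apply exp_0.
    split.
    + unfold Rdiv. apply Rmult_le_pos. lra. left; apply Rinv_0_lt_compat; auto.
    + apply (Rmult_le_reg_r (sqrt a)); auto. unfold Rdiv. rewrite Rmult_assoc, Rinv_l by lra. lra.
Qed.

Lemma f2_mono s1 s2 : 0 <= s1 -> s1 < s2 ->
  s1 * sqrt (1 + s1*s1) + ln (s1 + sqrt (1 + s1*s1)) < s2 * sqrt (1 + s2*s2) + ln (s2 + sqrt (1 + s2*s2)).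
Proof.
  intros H1 H2.
  assert (Hr : sqrt (1 + s1*s1) < sqrt (1 + s2*s2)) by (apply sqrt_lt_1; nra).
  assert (Hr1 : 0 < sqrt (1 + s1*s1)) by (apply sqrt_lt_R0; nra).
  assert (s1 * sqrt (1 + s1*s1) < s2 * sqrt (1 + s2*s2)) by nra.
  assert (ln (s1 + sqrt (1 + s1*s1)) < ln (s2 + sqrt (1 + s2*s2))) by (apply ln_increasing; lra).
  lra.
Qed.

Lemma case2_real (a : R) : a < 0 ->
  forall x y : R, 0 <= x -> x < y -> h x (a, 0) < h y (a, 0).
Proof.
  intros Ha.
  assert (Hl : ((a, 0) : C) <> RtoC 0) by (intro E; injection E; lra).
  assert (Hm : Cmod (a, 0) = -a).
  { unfold Cmod; cbn [fst snd]. replace (a^2 + 0^2) with ((-a)*(-a)) by ring. apply sqrt_square. lra. }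
  assert (Harg : Carg (a, 0) = PI).
  { unfold Carg; cbn [Re Im fst snd]. destruct (Rlt_dec 0 a); [lra|]. destruct (Rlt_dec a 0); [|lra].
    destruct (Rle_dec 0 0); [|lra]. unfold Rdiv. rewrite Rmult_0_l, atan_0. ring. }
  assert (Hsa : 0 < sqrt (-a)) by (apply sqrt_lt_R0; lra).
  assert (Hh : forall x, 0 <= x -> h x (a,0) = exp (a * (- (1/2) * ((x / sqrt (-a)) * sqrt (1 + (x / sqrt (-a))*(x / sqrt (-a))) + ln ((x / sqrt (-a)) + sqrt (1 + (x / sqrt (-a))*(x / sqrt (-a)))))))).
  { intros x Hx. rewrite h_eq by auto.
    replace (tpt x (a,0)) with ((0, - (x / sqrt (-a))) : C).
    2: { unfold tpt. rewrite Hm, Harg, cos_PI2, sin_PI2. unfold Rdiv. f_equal; ring. }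
    rewrite Re_xi_imag. simpl. f_equal. ring.
    unfold Rdiv. apply Rmult_le_pos; auto. left; apply Rinv_0_lt_compat; auto. }
  intros x y Hx Hxy. rewrite !Hh by lra.
  apply exp_increasing.
  assert (x / sqrt (-a) < y / sqrt (-a)) by (unfold Rdiv; apply Rmult_lt_compat_r; auto; apply Rinv_0_lt_compat; auto).
  assert (0 <= x / sqrt (-a)) by (unfold Rdiv; apply Rmult_le_pos; auto; left; apply Rinv_0_lt_compat; auto).
  pose proof (f2_mono (x / sqrt (-a)) (y / sqrt (-a)) H0 H).
  nra.
Qed.

Lemma Ft_mono a b rho phi x y : 0 < b -> 0 <= x -> x < y -> Ft a b rho phi x < Ft a b rho phi y.
Proof.
  intros Hb Hx Hxy.
  destruct (MVT_gen (Ft a b rho phi) x y (Pf a b)) as [c [Hc E]].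
  - intros z Hz. rewrite Rmin_left, Rmax_right in Hz by lra. apply Ft_der; lra.
  - intros z Hz. rewrite Rmin_left, Rmax_right in Hz by lra. apply continuity_pt_filterlim.
    apply (ex_derive_continuous (K := R_AbsRing) (V := R_NormedModule)). eexists. apply Ft_der; lra.
  - destruct (PQf_facts a b c Hb) as (_ & HP & _).
    assert (0 < Pf a b c * (y - x)) by (apply Rmult_lt_0_compat; lra). lra.
Qed.

Lemma xi_sector (t : C) : open_sector t -> xi t = xi_formula t.
Proof. intro Hs. unfold xi. destruct (excluded_middle_informative (open_sector t)); [reflexivity|contradiction]. Qed.

Lemma case2_pos (a b : R) : 0 < b -> forall x y, 0 <= x -> x < y -> h x (a,b) < h y (a,b).
Proof.
  intro Hb.
  pose proof PI_RGT_0 as HPI.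
  assert (Hl : ((a, b) : C) <> RtoC 0) by (intro E; injection E; lra).
  destruct (polar1 (a,b) Hl) as [Ea Eb]. cbn [Re Im fst snd] in Ea, Eb.
  pose proof (Carg_range (a,b)) as Hrg.
  assert (Hr : 0 < Cmod (a,b)) by (apply Cmod_gt_0; auto).
  set (rho := Cmod (a,b)) in *. set (phi := Carg (a,b)) in *.
  assert (Hphi : 0 < phi < PI).
  { split.
    - destruct (Rle_lt_dec phi 0); auto. exfalso.
      assert (0 <= sin (- phi)) by (apply sin_ge_0; lra). rewrite sin_neg in H. nra.
    - destruct (Req_dec phi PI). rewrite H, sin_PI in Eb. lra. lra. }
  set (al := phi / 2).
  set (sr := sqrt rho).
  assert (Hsr : 0 < sr) by (apply sqrt_lt_R0; auto).
  assert (Hsrr : sr * sr = rho) by (apply sqrt_sqrt; lra).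
  set (c := cos al). set (d := sin al).
  assert (Hal : 0 < al < PI/2) by (unfold al; lra).
  assert (Hphi2 : phi = 2 * al) by (unfold al; field).
  assert (Ha' : a = sr*sr*(c*c - d*d)) by (rewrite Ea, Hsrr, Hphi2, cos_2a; reflexivity).
  assert (Hb' : b = sr*sr*(2*c*d)) by (rewrite Eb, Hsrr, Hphi2, sin_2a; unfold c, d; ring).
  assert (Hc0 : 0 < c) by (apply cos_gt_0; lra).
  assert (Hd0 : 0 < d) by (apply sin_gt_0; lra).
  assert (Hcd : c*c + d*d = 1) by (pose proof (sin2_cos2 al); unfold Rsqr in *; unfold c, d; lra).
  assert (Ht : forall x, tpt x (a,b) = (x*/sr*c, -(x*/sr*d))).
  { intro x. unfold tpt. fold rho phi. fold al sr c d. f_equal; ring. }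
  assert (HF : forall x, 0 <= x -> h x (a,b) = exp (Ft a b rho phi x)).
  { intros x Hx. rewrite h_eq by auto. rewrite Ht. cbn [Re Im fst snd]. f_equal.
    destruct (Req_dec x 0) as [Hx0|Hx0].
    - subst x. replace ((0 * / sr * c, - (0 * / sr * d)) : C) with ((0,0) : C) by (f_equal; ring).
      rewrite xi_zero_Re, xi_zero_Im.
      assert (EM : mf a b 0 = rho) by (unfold mf, rho, Cmod; cbn [fst snd]; f_equal; ring).
      assert (EP : Pf a b 0 = sr*d).
      { unfold Pf. rewrite EM. rewrite <- (sqrt_square (sr*d)) by nra. f_equal.
        rewrite Ha', <- Hsrr.
        replace (c*c) with (1 - d*d) by lra. field. }
      assert (EQ : Qf a b 0 = sr*c).
      { unfold Qf. rewrite EM. rewrite <- (sqrt_square (sr*c)) by nra. f_equal.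
        rewrite Ha', <- Hsrr.
        replace (d*d) with (1 - c*c) by lra. field. }
      unfold Ft. rewrite EP, EQ.
      replace ((0 + sr * d) ^ 2 + (sr * c) ^ 2) with (sr*sr*(c*c+d*d)) by ring. rewrite Hcd, Rmult_1_r, Hsrr.
      replace (- (sr * c) / (0 + sr * d)) with (tan (al - PI/2)).
      2: { unfold tan. rewrite sin_minus, cos_minus, sin_PI2, cos_PI2. fold c d. field. lra. }
      rewrite atan_tan by lra. rewrite Hphi2. field.
    - assert (Hxp : 0 < x) by lra.
      assert (Hs : open_sector (x * / sr * c, - (x * / sr * d))).
      { apply sector_iff. cbn [Re Im fst snd].
        assert (0 < x * / sr) by (apply Rmult_lt_0_compat; auto; apply Rinv_0_lt_compat; auto).
        split; nra. }
      rewrite xi_sector by auto. rewrite Re_xif, Im_xif by auto.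
      rewrite (key_b a b x sr c d al) by auto.
      unfold Ft. rewrite <- Hsrr, ln_mult by auto. rewrite Hphi2. field. }
  intros x y Hx Hxy. rewrite !HF by lra. apply exp_increasing. apply Ft_mono; auto.
Qed.


Theorem lemma2p3 (lam : C) (Hnz : lam <> 0%C) (Hup : 0 <= Im lam) :
  ((Im lam = 0 /\ 0 < Re lam) ->
     (forall x y : R, sqrt (Re lam) <= x -> x < y -> h x lam < h y lam) /\
     (forall x : R, 0 <= x <= sqrt (Re lam) -> h x lam = 1))
  /\
  (0 < Carg lam <= PI ->
     forall x y : R, 0 <= x -> x < y -> h x lam < h y lam).
Proof.
  split.
  - intros [H1 H2]. apply case1; auto.
  - intros Harg x y Hx Hxy. destruct lam as [a b]. simpl in Hup.
    destruct (Rle_lt_or_eq_dec 0 b Hup) as [Hb|Hb].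
    + apply case2_pos; auto.
    + subst b. destruct (Rtotal_order a 0) as [Ha|[Ha|Ha]].
      * apply case2_real; auto.
      * exfalso. apply Hnz. subst. reflexivity.
      * exfalso. rewrite Carg_pos_real in Harg by auto. lra.
Qed.
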